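(* Let $q$ be a positive integer which is not prime, with $q_0\ge 4$, and let $n$ be an integer with $2\le n\le q_0-2$. Then \[ |I_0(q,n)|\ \ge\ \frac{1}{q_0}\binom{q_0}{n}. \]
   Context: Set $q_0=(q-1)/2$ if $q$ is odd and $q_0=q/2$ if $q$ is even. Let $\widetilde I(q,n)$ be the set of $n$-tuples of integers and $\widetilde I_0(q,n)=\{(p_1,\dots,p_n)\in\widetilde I(q,n): p_i\not\equiv \pm p_j \pmod q \text{ for } 1\le i<j\le n,\ \gcd(p_1,\dots,p_n,q)=1\}$. Two tuples $(p_1,\dots,p_n)$ and $(s_1,\dots,s_n)$ are equivalent if there exist an integer $l$ coprime to $q$ and signs $e_i\in\{-1,1\}$ such that $(p_1,\dots,p_n)$ is a permutation of $(e_1ls_1,\dots,e_nls_n)$ modulo $q$. $I_0(q,n)=\widetilde I_0(q,n)/\!\sim$. *)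

(* Defs.v *)
From HB Require Import structures.
From mathcomp Require Import all_boot all_order all_algebra all_fingroup.
Set Implicit Arguments. Unset Strict Implicit. Unset Printing Implicit Defensive.
Import Order.TTheory GRing.Theory Num.Theory.
Local Open Scope ring_scope.

Definition q0 (q : nat) : nat := if odd q then ((q - 1) %/ 2)%N else (q %/ 2)%N.

(* Integer n-tuples are represented by their residues mod q (all the
   conditions and the equivalence relation only depend on residues mod q).
   A residue t_i : 'I_q is read as the integer (t_i : nat)%:Z. *)

Definition I0tilde (q n : nat) : {set n.-tuple 'I_q} :=
  [set t : n.-tuple 'I_q |
    [forall i : 'I_n, forall j : 'I_n, (i < j)%N ==>
       (~~ (((tnth t i : nat)%:Z == (tnth t j : nat)%:Z %[mod q%:Z])%Z)
        && ~~ (((tnth t i : nat)%:Z == - (tnth t j : nat)%:Z %[mod q%:Z])%Z))]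
    && (foldr gcdn q [seq nat_of_ord x | x <- t] == 1%N)].

Definition tequiv (q n : nat) (p s : n.-tuple 'I_q) : bool :=
  [exists l : 'I_q, coprime l q &&
    [exists sigma : 'S_n, exists e : n.-tuple bool,
      [forall i : 'I_n,
        ((tnth p i : nat)%:Z ==
           (-1) ^+ (tnth e (sigma i)) * (l : nat)%:Z * (tnth s (sigma i) : nat)%:Z
           %[mod q%:Z])%Z]]].

Definition I0 (q n : nat) : {set {set n.-tuple 'I_q}} :=
  [set [set p in I0tilde q n | tequiv p s] | s in I0tilde q n].

(* Main.v *)
Require Import Defs.
From HB Require Import structures.
From mathcomp Require Import all_boot all_order all_algebra all_fingroup.
From Stdlib Require Import Lia.
Import Order.TTheory GRing.Theory Num.Theory.
Local Open Scope ring_scope.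
Set Implicit Arguments. Unset Strict Implicit.

Ltac nlia := repeat match goal with H : is_true (leq _ _) |- _ => apply (elimT ssrnat.leP) in H end;
  try apply/ssrnat.leP; change addn with Nat.add in *; change subn with Nat.sub in *; change muln with Nat.mul in *; lia.

Lemma q0_double q : ((q0 q).*2 <= q)%N.
Proof.
rewrite /q0 -addnn; have := odd_double_half q; rewrite -addnn.
set h := q./2; case: (odd q) => /= E.
  have -> : ((q - 1) %/ 2 = h)%N.
    by rewrite -E add1n subn1 /= divn2 addnn doubleK.
  nlia.
rewrite divn2 -/h; nlia.
Qed.

Lemma congZ (p : nat) (x y : int) :
  (x == y %[mod (p.+2)%:Z])%Z -> (x%:~R : 'Z_p.+2) = y%:~R.
Proof.
rewrite eqz_mod_dvd => /dvdzP [c Hc]; apply/eqP; rewrite -subr_eq0 -rmorphB /= Hc.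
by rewrite intrM /= (_ : (p.+2)%:Z%:~R = (p.+2)%:R :> 'Z_p.+2) // (pchar_Zp (isT : (1 < p.+2)%N)) mulr0.
Qed.

Lemma smallZ (p a b : nat) (e : bool) :
  (1 <= a <= q0 p.+2)%N -> (1 <= b <= q0 p.+2)%N ->
  (a%:R : 'Z_p.+2) = (-1) ^+ e * b%:R -> a = b.
Proof.
move=> /andP[a1 am] /andP[b1 bm]; have := q0_double p.+2; rewrite -addnn => qd.
have aq : (a < p.+2)%N by nlia.
have bq : (b < p.+2)%N by nlia.
case: e; rewrite /= ?mul1r ?expr1 ?mulN1r.
  move/eqP; rewrite -subr_eq0 opprK -natrD => /eqP/(congr1 val).
  move=> H; move: H (val_Zp_nat (isT : (1 < p.+2)%N) (a + b)) => /= -> /esym/eqP.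
  rewrite -/(dvdn _ _) => /dvdn_leq; rewrite addn_gt0 a1 => /(_ isT) H; nlia.
move=> H; have := val_Zp_nat (isT : (1 < p.+2)%N) a; have := val_Zp_nat (isT : (1 < p.+2)%N) b.
by rewrite H /= !modn_small // => ->.
Qed.

Lemma congZ' (p a b : nat) (e : bool) :
  ((a%:Z == (-1) ^+ e * b%:Z %[mod (p.+2)%:Z])%Z) -> (a%:R : 'Z_p.+2) = (-1) ^+ e * b%:R.
Proof. by move/congZ; rewrite intrM intr_sign. Qed.

Lemma foldr_gcd_dvd (q : nat) (s : seq nat) x : x \in s -> (foldr gcdn q s %| x)%N.
Proof.
elim: s => //= y s IH; rewrite inE => /orP[/eqP ->|/IH H]; first exact: dvdn_gcdl.
exact: dvdn_trans (dvdn_gcdr _ _) H.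
Qed.

Lemma I0tilde_mem (p n : nat) (t : n.-tuple 'I_p.+2) :
  injective (tnth t) ->
  (forall i, 1 <= tnth t i <= q0 p.+2)%N ->
  (exists i, tnth t i = 1%N :> nat) ->
  t \in I0tilde p.+2 n.
Proof.
move=> inj rng [i0 Hi0]; rewrite inE; apply/andP; split.
  apply/forallP => i; apply/forallP => j; apply/implyP => ltij.
  have nij : tnth t i != tnth t j.
    by apply/eqP => /inj E; move: ltij; rewrite E ltnn.
  apply/andP; split; apply/negP.
    rewrite -[X in (_ == X %[mod _])%Z]mul1r -(expr0 (-1 : int)) => /(@congZ' _ _ _ false).
    by move/smallZ => /(_ (rng i) (rng j)) /val_inj E; rewrite E eqxx in nij.
  rewrite -[X in (_ == - X %[mod _])%Z]mul1r -mulNr -(expr1 (-1 : int)) => /(@congZ' _ _ _ true).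
  by move/smallZ => /(_ (rng i) (rng j)) /val_inj E; rewrite E eqxx in nij.
have : (foldr gcdn p.+2 [seq nat_of_ord x | x <- t] %| 1)%N.
  apply: foldr_gcd_dvd; rewrite -Hi0; apply: map_f; exact: mem_tnth.
by rewrite dvdn1.
Qed.

Lemma sgn2 (R : pzRingType) (b : bool) : (-1) ^+ b * (-1) ^+ b = 1 :> R.
Proof. by rewrite -signr_addb addbb. Qed.

Definition relT {q n : nat} (p s : n.-tuple 'I_q) (l : 'I_q) (sigma : 'S_n)
  (e : n.-tuple bool) :=
  [forall i : 'I_n,
        ((tnth p i : nat)%:Z ==
           (-1) ^+ (tnth e (sigma i)) * (l : nat)%:Z * (tnth s (sigma i) : nat)%:Z
           %[mod q%:Z])%Z].

Lemma relZ p n (r s : n.-tuple 'I_p.+2) l sigma e : relT r s l sigma e ->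
  forall i, ((tnth r i : nat)%:R : 'Z_p.+2) =
     (-1) ^+ (tnth e (sigma i)) * (l : nat)%:R * (tnth s (sigma i) : nat)%:R.
Proof. by move=> /forallP H i; move/congZ: (H i); rewrite !intrM intr_sign. Qed.

Arguments relZ {p n r s l sigma e}.

Lemma key p n (r s1 s2 : n.-tuple 'I_p.+2) (i : 'I_n) (l1 l2 : 'I_p.+2)
  (sg1 sg2 : 'S_n) (e1 e2 : n.-tuple bool) (b1 b2 : bool) :
  coprime l1 p.+2 -> relT r s1 l1 sg1 e1 -> relT r s2 l2 sg2 e2 ->
  ((tnth r i : nat)%:Z == (-1) ^+ b1 * (l1 : nat)%:Z %[mod (p.+2)%:Z])%Z ->
  ((tnth r i : nat)%:Z == (-1) ^+ b2 * (l2 : nat)%:Z %[mod (p.+2)%:Z])%Z ->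
  (forall j, 1 <= tnth s1 j <= q0 p.+2)%N ->
  (forall j, 1 <= tnth s2 j <= q0 p.+2)%N ->
  forall a, exists a', tnth s1 a = tnth s2 a'.
Proof.
move=> cop R1 R2 H1 H2 rg1 rg2 a.
move/congZ: H1; rewrite intrM intr_sign => H1.
move/congZ: H2; rewrite intrM intr_sign => H2.
set k := (sg1^-1)%g a.
exists (sg2 k); apply: val_inj.
apply: (@smallZ p _ _ (tnth e1 a (+) tnth e2 (sg2 k) (+) b1 (+) b2) (rg1 a) (rg2 _)).
have E1 := relZ R1 k; have E2 := relZ R2 k.
rewrite /k permKV -/k in E1.
set L1 := ((l1 : nat)%:R : 'Z_p.+2) in H1 E1 *.
set L2 := ((l2 : nat)%:R : 'Z_p.+2) in H2 E2 *.
set S1 := ((tnth s1 a : nat)%:R : 'Z_p.+2) in E1 *.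
set S2 := ((tnth s2 (sg2 k) : nat)%:R : 'Z_p.+2) in E2 *.
set x1 := (-1) ^+ tnth e1 a in E1 *.
set x2 := (-1) ^+ tnth e2 (sg2 k) in E2 *.
set d1 := (-1) ^+ b1 in H1 *. set d2 := (-1) ^+ b2 in H2 *.
have uL1 : L1 \is a GRing.unit by rewrite unitZpE // coprime_sym.
have hL2 : L2 = d2 * d1 * L1.
  by rewrite -mulrA -H1 H2 mulrA sgn2 mul1r.
have xx1 : x1 * x1 = 1 by exact: sgn2.
apply: (mulrI uL1).
have : x1 * L1 * S1 = x2 * L2 * S2 by rewrite -E1 -E2.
rewrite hL2 !signr_addb -/x1 -/x2 -/d1 -/d2 => E.
have : x1 * (x1 * L1 * S1) = x1 * (x2 * (d2 * d1 * L1) * S2) by rewrite E.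
rewrite !mulrA xx1 mul1r => ->.
congr (_ * _); rewrite [in RHS](mulrAC _ d1 d2) [in RHS](mulrC L1) -!mulrA; congr (_ * _).
by rewrite [RHS]mulrC -!mulrA.
Qed.

Section Main.
Variables (p n' : nat).
Local Notation q := p.+2.
Local Notation n := n'.+1.
Local Notation m := (q0 q).
Hypothesis m4 : (4 <= m)%N.

Let mq : (m < q)%N.
Proof. have := q0_double q; rewrite -addnn => H; nlia. Qed.

Definition one : 'I_q := inord 1.
Lemma one_val : (one : nat) = 1%N.
Proof. by rewrite /one inordK. Qed.

Definition Rg : {set 'I_q} := [set k : 'I_q | (1 <= k <= m)%N].
Definition R' : {set 'I_q} := [set k : 'I_q | (2 <= k <= m)%N].
Definition Dr : {set {set 'I_q}} := [set B : {set 'I_q} | (B \subset R') && (#|B| == n')].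
Definition D : {set {set 'I_q}} := [set one |: B | B in Dr].
Definition dflt : n.-tuple 'I_q := [tuple of nseq n one].
Definition tup (S : {set 'I_q}) : n.-tuple 'I_q := insubd dflt (enum S).
Definition cls (S : {set 'I_q}) := [set x in I0tilde q n | tequiv x (tup S)].
Definition rep (C : {set n.-tuple 'I_q}) := odflt dflt [pick x in C].
Definition Pr (r t : n.-tuple 'I_q) (i : 'I_n) :=
  [exists l : 'I_q, [exists sg : 'S_n, [exists e : n.-tuple bool, [exists b : bool,
    [&& coprime l q, relT r t l sg e &
      ((tnth r i : nat)%:Z == (-1) ^+ b * (l : nat)%:Z %[mod q%:Z])%Z]]]]].
Definition jj S := odflt ord0 [pick i | Pr (rep (cls S)) (tup S) i].
Definition F S := (cls S, jj S).

Lemma D_prop (S : {set 'I_q}) : S \in D -> [/\ S \subset Rg, one \in S & #|S| = n].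
Proof.
rewrite /D => /imsetP[B]; rewrite inE => /andP[sB /eqP cB] ->.
have nB : one \notin B.
  apply/negP => /(subsetP sB); rewrite inE one_val.
  by [].
split.
- apply/subsetP => k; rewrite !inE => /orP[/eqP ->|/(subsetP sB)].
    by rewrite one_val /=; nlia.
  by rewrite inE => /andP[H1 H2]; rewrite H2 andbT; nlia.
- by rewrite setU11.
- by rewrite cardsU1 nB cB.
Qed.

Lemma tup_val (S : {set 'I_q}) : #|S| = n -> val (tup S) = enum S.
Proof. by move=> cS; rewrite val_insubd -cardE cS eqxx. Qed.

Lemma tup_mem (S : {set 'I_q}) k : #|S| = n -> (k \in tup S) = (k \in S).
Proof. by move=> cS; rewrite -[k \in tup S]/(k \in val (tup S)) tup_val // mem_enum. Qed.

Lemma tup_inj (S : {set 'I_q}) : #|S| = n -> injective (tnth (tup S)).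
Proof. by move=> cS; apply/tuple_uniqP; rewrite tup_val // enum_uniq. Qed.

Lemma tup_I0 (S : {set 'I_q}) : S \in D -> tup S \in I0tilde q n.
Proof.
case/D_prop => sR oS cS; apply: I0tilde_mem; first exact: tup_inj.
  move=> i; have : tnth (tup S) i \in S by rewrite -tup_mem // mem_tnth.
  by move/(subsetP sR); rewrite inE.
have : one \in tup S by rewrite tup_mem.
by case/tnthP => i Hi; exists i; rewrite -Hi one_val.
Qed.

Lemma tequiv_refl (t : n.-tuple 'I_q) : tequiv t t.
Proof.
apply/existsP; exists one; rewrite one_val coprime1n /=.
apply/existsP; exists 1%g; apply/existsP; exists [tuple of nseq n false].
apply/forallP => i; rewrite perm1 tnth_nseq /= expr0 !mul1r.
by rewrite eqz_mod_dvd subrr dvdz0.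
Qed.

Lemma cls_I0 (S : {set 'I_q}) : S \in D -> cls S \in I0 q n.
Proof. by move=> DS; apply/imsetP; exists (tup S); [exact: tup_I0|]. Qed.

Lemma rep_cls (S : {set 'I_q}) : S \in D -> tequiv (rep (cls S)) (tup S).
Proof.
move=> DS; rewrite /rep; case: pickP => [x|].
  by rewrite inE => /andP[].
by move/(_ (tup S)); rewrite inE tup_I0 // tequiv_refl.
Qed.

Lemma Pr_ex (S : {set 'I_q}) : S \in D -> exists i, Pr (rep (cls S)) (tup S) i.
Proof.
move=> DS; have [sR oS cS] := D_prop DS.
case/existsP: (rep_cls DS) => l /andP[cop /existsP[sg /existsP[e R]]].

have : one \in tup S by rewrite tup_mem.
case/tnthP => a Ha.
exists ((sg^-1)%g a); apply/existsP; exists l; apply/existsP; exists sg.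
apply/existsP; exists e; apply/existsP; exists (tnth e a).
apply/and3P; split; [exact: cop | rewrite /relT; exact R |].
move/forallP: R => /(_ ((sg^-1)%g a)); rewrite permKV -Ha one_val mulr1 => H.
exact: H.
Qed.

Lemma Pr_jj (S : {set 'I_q}) : S \in D -> Pr (rep (cls S)) (tup S) (jj S).
Proof.
move=> DS; rewrite /jj; case: pickP => [i Hi|none]; first exact: Hi.
case: (Pr_ex DS) => i; rewrite none; discriminate.
Qed.
Lemma F_inj : {in D &, injective F}.
Proof.
move=> S1 S2 D1 D2 E.
have Ec : cls S1 = cls S2 by exact: (congr1 fst E).
have Ej : jj S1 = jj S2 by exact: (congr1 snd E).
have [sR1 o1 c1] := D_prop D1; have [sR2 o2 c2] := D_prop D2.
have P1 := Pr_jj D1; have P2 := Pr_jj D2.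
rewrite -Ec -Ej in P2.
case/existsP: P1 => l1 /existsP[sg1 /existsP[e1 /existsP[b1 /and3P[cop1 R1 H1]]]].
case/existsP: P2 => l2 /existsP[sg2 /existsP[e2 /existsP[b2 /and3P[cop2 R2 H2]]]].
have rg (S : {set 'I_q}) : S \in D -> forall j, (1 <= tnth (tup S) j <= m)%N.
  move=> DS j; have [sR _ cS] := D_prop DS.
  have : tnth (tup S) j \in S by rewrite -(tup_mem _ cS) mem_tnth.
  move/(subsetP sR); rewrite inE; exact.
have K := key cop1 R1 R2 H1 H2 (rg _ D1) (rg _ D2).
apply/eqP; rewrite eqEcard c1 c2 leqnn andbT; apply/subsetP => k.
rewrite -(tup_mem _ c1) => /tnthP[a ->]; case: (K a) => a' ->.
rewrite -(tup_mem _ c2); exact: mem_tnth.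
Qed.

Lemma card_R' : (m.-1 <= #|R'|)%N.
Proof.
pose f := fun k : 'I_m.-1 => (inord (k + 2) : 'I_q).
have fv (k : 'I_m.-1) : (f k : nat) = (k + 2)%N.
  rewrite /f inordK //; have := ltn_ord k => H; nlia.
have finj : injective f.
  move=> a b /(congr1 (@nat_of_ord _)); rewrite !fv => /eqP; rewrite eqn_add2r => /eqP ab.
  exact: val_inj.
have <- : #|[set f k | k in 'I_m.-1]| = m.-1 by rewrite card_imset // card_ord.
apply: subset_leq_card; apply/subsetP => x /imsetP[k _ ->].
rewrite inE fv; have := ltn_ord k => H; apply/andP; split; nlia.
Qed.

Lemma card_D : ('C(m.-1, n') <= #|D|)%N.
Proof.
rewrite /D card_in_imset.
  by rewrite /Dr cards_draws; apply: leq_bin2l; exact: card_R'.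
have nB (B : {set 'I_q}) : B \in Dr -> one \notin B.
  rewrite inE => /andP[sB _]; apply/negP => /(subsetP sB); rewrite inE one_val.
  by [].
move=> B1 B2 H1 H2 E.
by rewrite -(setU1K (nB _ H1)) E (setU1K (nB _ H2)).
Qed.

Lemma main_ineq : ('C(m.-1, n') <= #|I0 q n| * n)%N.
Proof.
apply: (leq_trans card_D).
rewrite -(card_in_imset F_inj).
have -> : (#|I0 q n| * n = #|setX (I0 q n) [set: 'I_n]|)%N by rewrite cardsX cardsT card_ord.
apply: subset_leq_card; apply/subsetP => x /imsetP[S DS ->].
rewrite in_setX in_setT andbT; exact: cls_I0.
Qed.
End Main.

Theorem proposition2p1p1 (q n : nat) :
  (0 < q)%N -> ~~ prime q -> (4 <= q0 q)%N ->
  (2 <= n)%N -> (n <= q0 q - 2)%N ->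
  ((#|I0 q n|)%:R : rat) >= (1 / (q0 q)%:R) * ('C(q0 q, n))%:R.
Proof.
move=> _ _ m4 n2 _.
have q2 : (1 < q)%N by have := q0_double q; rewrite -addnn => H; nlia.
case: q q2 m4 => [|[|p]] // _ m4.
case: n n2 => [|n'] // _.
have H := @main_ineq p n' m4.
have m0 : (0 < q0 p.+2)%N by nlia.
have H2 : ('C(q0 p.+2, n'.+1) <= q0 p.+2 * #|I0 p.+2 n'.+1|)%N.
  rewrite -(leq_pmul2l (isT : 0 < n'.+1)%N) -mul_bin_diag.
  rewrite mulnCA; rewrite leq_pmul2l //; by rewrite mulnC.
rewrite mul1r mulrC ler_pdivrMr ?ltr0n // -natrM ler_nat mulnC.
exact: H2.
Qed.
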